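(* Let $f$ be a harmonic function on $K$ whose restriction to the edge $[p_1,p_2]\cong[0,1]$ is strictly monotone. Then the derivative of this restriction at $t=\frac12$ exists in the extended sense and equals $+\infty$ if the restriction is increasing and $-\infty$ if it is decreasing.
   Context: Let $p_0,p_1,p_2$ be the vertices of a unit equilateral triangle in $\mathbb{R}^2$, $F_i(x)=(x+p_i)/2$, and $K$ the Sierpinski gasket (the attractor of $F_0,F_1,F_2$). Minimal triangles of the graph $G_m$ are the triangles with vertices $F_w(p_0),F_w(p_1),F_w(p_2)$ for words $w$ of length $m$. A continuous $f:K\to\mathbb{R}$ is harmonic if for every $m\ge0$ and every minimal triangle of $G_m$ with vertices $v_i,v_j,v_k$, the value at the midpoint $v_{ij}$ of $[v_i,v_j]$ is $\frac15(2f(v_i)+2f(v_j)+f(v_k))$. The edge $[p_1,p_2]$ is identified with $[0,1]$ via $t\mapsto p_1+t(p_2-p_1)$. *)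

(* Defs.v *)
From HB Require Import structures.
From mathcomp Require Import all_boot all_order all_algebra.
From mathcomp Require Import all_classical all_reals all_analysis.
Set Implicit Arguments. Unset Strict Implicit. Unset Printing Implicit Defensive.
Import Order.TTheory GRing.Theory Num.Theory.
Import numFieldNormedType.Exports.
Local Open Scope ring_scope.
Local Open Scope classical_set_scope.

Section Gasket.
Variable R : realType.

Definition p0 : R * R := (1 / 2, Num.sqrt 3 / 2).
Definition p1 : R * R := (0, 0).
Definition p2 : R * R := (1, 0).

Definition vtx (i : 'I_3) : R * R :=
  match val i with 0%N => p0 | 1%N => p1 | _ => p2 end.

Definition Fmap (i : 'I_3) (x : R * R) : R * R :=
  ((x.1 + (vtx i).1) / 2, (x.2 + (vtx i).2) / 2).

Definition Fword (w : seq 'I_3) (x : R * R) : R * R := foldr Fmap x w.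

Definition midpt (x y : R * R) : R * R := ((x.1 + y.1) / 2, (x.2 + y.2) / 2).

Definition sg_attractor (K : set (R * R)) : Prop :=
  [/\ compact K, K !=set0 & K = \bigcup_(i in [set: 'I_3]) (Fmap i @` K)].

Definition sg_harmonic (K : set (R * R)) (f : R * R -> R) : Prop :=
  {within K, continuous f} /\
  forall (w : seq 'I_3) (i j k : 'I_3), i != j -> j != k -> i != k ->
    f (midpt (Fword w (vtx i)) (Fword w (vtx j))) =
    (2 * f (Fword w (vtx i)) + 2 * f (Fword w (vtx j)) + f (Fword w (vtx k))) / 5.

Definition edge12 (t : R) : R * R :=
  (p1.1 + t * (p2.1 - p1.1), p1.2 + t * (p2.2 - p1.2)).

End Gasket.

(* Main.v *)
Require Import Defs.
From HB Require Import structures.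
From mathcomp Require Import all_boot all_order all_algebra.
From mathcomp Require Import all_classical all_reals all_analysis.
From mathcomp Require Import ring lra.
Import Order.TTheory GRing.Theory Num.Theory.
Import numFieldNormedType.Exports.
Local Open Scope ring_scope.
Local Open Scope classical_set_scope.

Definition o0 : 'I_3 := @Ordinal 3 0 erefl.
Definition o1 : 'I_3 := @Ordinal 3 1 erefl.
Definition o2 : 'I_3 := @Ordinal 3 2 erefl.

Lemma Fmap_mid (R : realType) i (x y : R * R) :
  Fmap i (midpt x y) = midpt (Fmap i x) (Fmap i y).
Proof. rewrite /Fmap /midpt /=; congr pair; by field. Qed.

Lemma Fword_mid (R : realType) w (x y : R * R) :
  Fword w (midpt x y) = midpt (Fword w x) (Fword w y).
Proof. elim: w => //= i w IH; by rewrite IH Fmap_mid. Qed.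

Lemma F1p0 (R : realType) : Fmap o1 (p0 R) = midpt (p0 R) (p1 R).
Proof. rewrite /Fmap /midpt /vtx /=; congr pair; ring. Qed.
Lemma F1p1 (R : realType) : Fmap o1 (p1 R) = p1 R.
Proof. rewrite /Fmap /vtx /p1 /=; congr pair; by field. Qed.
Lemma F1p2 (R : realType) : Fmap o1 (p2 R) = midpt (p1 R) (p2 R).
Proof. rewrite /Fmap /midpt /vtx /=; congr pair; ring. Qed.
Lemma F2p0 (R : realType) : Fmap o2 (p0 R) = midpt (p0 R) (p2 R).
Proof. rewrite /Fmap /midpt /vtx /=; congr pair; ring. Qed.
Lemma F2p1 (R : realType) : Fmap o2 (p1 R) = midpt (p1 R) (p2 R).
Proof. rewrite /Fmap /midpt /vtx /=; congr pair; ring. Qed.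
Lemma F2p2 (R : realType) : Fmap o2 (p2 R) = p2 R.
Proof. rewrite /Fmap /vtx /p2 /=; congr pair; by field. Qed.

Definition hmid (R : realType) (f : R * R -> R) :=
  forall (w : seq 'I_3) (i j k : 'I_3), i != j -> j != k -> i != k ->
    f (midpt (Fword w (vtx R i)) (Fword w (vtx R j))) =
    (2 * f (Fword w (vtx R i)) + 2 * f (Fword w (vtx R j)) + f (Fword w (vtx R k))) / 5.

Arguments hmid {R}.

Section Steps.
Variables (R : realType) (f : R * R -> R).
Hypothesis Hm : hmid f.

Lemma hm012 w : f (midpt (Fword w (p0 R)) (Fword w (p1 R))) =
  (2 * f (Fword w (p0 R)) + 2 * f (Fword w (p1 R)) + f (Fword w (p2 R))) / 5.
Proof. exact: (Hm w o0 o1 o2). Qed.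
Lemma hm021 w : f (midpt (Fword w (p0 R)) (Fword w (p2 R))) =
  (2 * f (Fword w (p0 R)) + 2 * f (Fword w (p2 R)) + f (Fword w (p1 R))) / 5.
Proof. exact: (Hm w o0 o2 o1). Qed.
Lemma hm120 w : f (midpt (Fword w (p1 R)) (Fword w (p2 R))) =
  (2 * f (Fword w (p1 R)) + 2 * f (Fword w (p2 R)) + f (Fword w (p0 R))) / 5.
Proof. exact: (Hm w o1 o2 o0). Qed.

Lemma foldr_nseq a n (x : R * R) :
  foldr (@Fmap R) (Fmap a x) (nseq n a) = Fmap a (foldr (@Fmap R) x (nseq n a)).
Proof. by elim: n => //= n ->. Qed.

Definition fm := f (midpt (p1 R) (p2 R)).

Lemma rec_closed (U V : nat -> R) :
  (forall n, U n.+1 = (2 * U n + V n) / 5) ->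
  (forall n, V n.+1 = (U n + 2 * V n) / 5) ->
  forall n, 2 * V n = (3/5)^+n * (U 0%N + V 0%N) - (1/5)^+n * (U 0%N - V 0%N).
Proof.
move=> hU hV.
have H : forall n, U n + V n = (3/5)^+n * (U 0%N + V 0%N) /\
                   U n - V n = (1/5)^+n * (U 0%N - V 0%N).
  elim=> [|n [IH1 IH2]]; first by rewrite !expr0 !mul1r.
  rewrite hU hV !exprS -!mulrA -IH1 -IH2; split; by field.
move=> n; have [H1 H2] := H n.
have -> : 2 * V n = (U n + V n) - (U n - V n) by ring.
by rewrite H1 H2.
Qed.

Definition Ur n := f (Fword (o2 :: nseq n o1) (p0 R)) - fm.
Definition Vr n := f (Fword (o2 :: nseq n o1) (p2 R)) - fm.

Lemma Wr_p1 n : Fword (o2 :: nseq n o1) (p1 R) = midpt (p1 R) (p2 R).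
Proof.
rewrite -F2p1; change (Fmap o2 (foldr (@Fmap R) (p1 R) (nseq n o1)) = Fmap o2 (p1 R)).
congr (Fmap o2 _); elim: n => // n IH.
change (Fmap o1 (foldr (@Fmap R) (p1 R) (nseq n o1)) = p1 R); by rewrite IH F1p1.
Qed.

Lemma Wr_S n (x : R * R) : Fword (o2 :: nseq n.+1 o1) x = Fword (o2 :: nseq n o1) (Fmap o1 x).
Proof. exact: (congr1 (Fmap o2) (esym (foldr_nseq o1 n x))). Qed.

Lemma Ur_S n : Ur n.+1 = (2 * Ur n + Vr n) / 5.
Proof.
rewrite /Ur /Vr Wr_S F1p0 Fword_mid hm012 Wr_p1 /fm; by field.
Qed.

Lemma Vr_S n : Vr n.+1 = (Ur n + 2 * Vr n) / 5.
Proof.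
rewrite /Ur /Vr Wr_S F1p2 Fword_mid hm120 Wr_p1 /fm; by field.
Qed.

Definition Ul n := f (Fword (o1 :: nseq n o2) (p0 R)) - fm.
Definition Vl n := f (Fword (o1 :: nseq n o2) (p1 R)) - fm.

Lemma Wl_p2 n : Fword (o1 :: nseq n o2) (p2 R) = midpt (p1 R) (p2 R).
Proof.
rewrite -F1p2; change (Fmap o1 (foldr (@Fmap R) (p2 R) (nseq n o2)) = Fmap o1 (p2 R)).
congr (Fmap o1 _); elim: n => // n IH.
change (Fmap o2 (foldr (@Fmap R) (p2 R) (nseq n o2)) = p2 R); by rewrite IH F2p2.
Qed.

Lemma Wl_S n (x : R * R) : Fword (o1 :: nseq n.+1 o2) x = Fword (o1 :: nseq n o2) (Fmap o2 x).
Proof. exact: (congr1 (Fmap o1) (esym (foldr_nseq o2 n x))). Qed.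

Lemma Ul_S n : Ul n.+1 = (2 * Ul n + Vl n) / 5.
Proof.
rewrite /Ul /Vl Wl_S F2p0 Fword_mid hm021 Wl_p2 /fm; by field.
Qed.

Lemma Vl_S n : Vl n.+1 = (Ul n + 2 * Vl n) / 5.
Proof.
rewrite /Ul /Vl Wl_S F2p1 Fword_mid hm120 Wl_p2 /fm; by field.
Qed.

Lemma Sr : Ur 0 + Vr 0 = 3 * (f (p2 R) - f (p1 R)) / 5.
Proof.
rewrite /Ur /Vr /= F2p0 F2p2 /fm.
have := hm021 [::]; have := hm120 [::]; rewrite /= => -> ->; by field.
Qed.

Lemma Sl : Ul 0 + Vl 0 = 3 * (f (p1 R) - f (p2 R)) / 5.
Proof.
rewrite /Ul /Vl /= F1p0 F1p1 /fm.
have := hm012 [::]; have := hm120 [::]; rewrite /= => -> ->; by field.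
Qed.

End Steps.

Definition ee (R : realType) (n : nat) : R := (2^-1)^+n.
Arguments ee {R}.

Lemma pt_r (R : realType) n :
  Fword (o2 :: nseq n o1) (p2 R) = edge12 (1/2 + ee n.+1).
Proof.
have H : foldr (@Fmap R) (p2 R) (nseq n o1) = (ee n, 0).
  elim: n => [|n IH]; first by rewrite /ee expr0.
  change (Fmap o1 (foldr (@Fmap R) (p2 R) (nseq n o1)) = (ee n.+1, 0)).
  rewrite IH /Fmap /vtx /ee /=; congr pair; rewrite ?exprS; by field.
change (Fmap o2 (foldr (@Fmap R) (p2 R) (nseq n o1)) = edge12 (1/2 + ee n.+1)).
rewrite H /Fmap /edge12 /vtx /ee /=; congr pair; rewrite ?exprS; by field.
Qed.

Lemma pt_l (R : realType) n :
  Fword (o1 :: nseq n o2) (p1 R) = edge12 (1/2 - ee n.+1).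
Proof.
have H : foldr (@Fmap R) (p1 R) (nseq n o2) = (1 - ee n, 0).
  elim: n => [|n IH]; first by rewrite /ee expr0 /p1 subrr.
  change (Fmap o2 (foldr (@Fmap R) (p1 R) (nseq n o2)) = (1 - ee n.+1, 0)).
  rewrite IH /Fmap /vtx /ee /=; congr pair; rewrite ?exprS; by field.
change (Fmap o1 (foldr (@Fmap R) (p1 R) (nseq n o2)) = edge12 (1/2 - ee n.+1)).
rewrite H /Fmap /edge12 /vtx /ee /=; congr pair; rewrite ?exprS; by field.
Qed.

Lemma pt_m (R : realType) : midpt (p1 R) (p2 R) = edge12 (1/2).
Proof. rewrite /midpt /edge12 /=; congr pair; by field. Qed.
Lemma pt_0 (R : realType) : edge12 (0 : R) = p1 R.
Proof. rewrite /edge12 /=; congr pair; by ring. Qed.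
Lemma pt_1 (R : realType) : edge12 (1 : R) = p2 R.
Proof. rewrite /edge12 /=; congr pair; by ring. Qed.

Lemma bern (R : realType) n : 1 + n%:R / 5 <= (6/5 : R)^+n.
Proof.
elim: n => [|n IH]; first by rewrite expr0 mulr0n mul0r addr0.
rewrite exprS -natr1.
have h0 : 0 <= (n%:R : R) by rewrite ler0n.
nra.
Qed.

Lemma grow (R : realType) (S D A : R) : 0 < S -> exists N, forall n, (N <= n)%N ->
  A <= 2^+n * (((3/5)^+n * S - (1/5)^+n * D) / 2).
Proof.
move=> S0.
have key n : n%:R / 5 * S - `|D| <= 2^+n * ((3/5)^+n * S - (1/5)^+n * D).
  have e1 : 2^+n * ((3/5)^+n * S - (1/5)^+n * D) =
            (6/5 : R)^+n * S - (2/5 : R)^+n * D.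
    rewrite mulrBr !mulrA -!exprMn; congr (_ ^+ _ * _ - _ ^+ _ * _); by field.
  rewrite e1.
  have b1 := bern R n.
  have b2 : 0 <= (2/5 : R)^+n by apply: exprn_ge0; lra.
  have b3 : (2/5 : R)^+n <= 1 by apply: exprn_ile1; lra.
  have b4 : D <= `|D| by apply: ler_norm.
  have b5 : - D <= `|D| by rewrite -normrN ler_norm.
  nra.
have [N HN] : exists N : nat, (2 * A + `|D|) * 5 / S < N%:R.
  exists (Num.truncn ((2 * A + `|D|) * 5 / S)).+1.
  exact: truncnS_gt.
exists N => n hn.
have hn' : (N%:R : R) <= n%:R by rewrite ler_nat.
have := key n.
have : (2 * A + `|D|) * 5 < N%:R * S by rewrite -ltr_pdivrMr.
move=> h1 h2.
nra.
Qed.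

Lemma ee_pos (R : realType) n : 0 < (ee n : R).
Proof. by apply: exprn_gt0; rewrite invr_gt0. Qed.

Lemma ee_le1 (R : realType) n : (ee n : R) <= 1.
Proof. apply: exprn_ile1; first by rewrite invr_ge0. rewrite invf_le1 //; lra. Qed.

Lemma ee_half (R : realType) n : (ee n.+1 : R) <= 1/2.
Proof. rewrite /ee exprS; have := ee_le1 R n; rewrite /ee => h.
have h0 : 0 < (2^-1 : R) by rewrite invr_gt0.
lra. Qed.

Lemma ee_inv (R : realType) n : 2^+n * (ee n : R) = 1.
Proof. by rewrite /ee -exprMn mulfV // expr1n. Qed.

Lemma dyad (R : realType) (N : nat) (x : R) : 0 < x -> x <= ee N ->
  exists n, (N <= n)%N /\ ee n.+1 <= x /\ x <= ee n.
Proof.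
move=> x0 xN.
have [K hK] : exists K, (ee K : R) < x.
  set K := (Num.truncn (x^-1)).+1.
  exists K.
  have h1 : x^-1 < K%:R by exact: truncnS_gt.
  have h2 : (K%:R : R) <= 2^+K.
    by rewrite -natrX ler_nat ltnW // ltn_expl.
  have h3 : x^-1 < 2^+K by apply: (lt_le_trans h1 h2).
  rewrite /ee exprVn -[x]invrK ltf_pV2 //.
  - by rewrite posrE exprn_gt0.
  - by rewrite posrE invr_gt0.
suff H : forall k, (ee (N + k) : R) < x -> exists n, (N <= n)%N /\ ee n.+1 <= x /\ x <= ee n.
  apply: (H K).
  apply: le_lt_trans hK.
  rewrite /ee exprD -[X in _ <= X]mul1r; apply: ler_wpM2r.
  - by apply: exprn_ge0; rewrite invr_ge0.
  - exact: ee_le1.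
elim=> [|k IH].
  by rewrite addn0 => h; move: (lt_le_trans h xN); rewrite ltxx.
move=> h.
case: (ltP (ee (N + k)) x) => h'; first exact: IH.
exists (N + k)%N; split; first exact: leq_addr.
by rewrite -addnS (ltW h) h'.
Qed.

Arguments dyad {R N x}.

Lemma key_ineq (R : realType) (A x r D P : R) : 0 < x -> 0 < r -> r <= D ->
  x * P <= 1 -> 0 <= P -> A <= P * r -> A <= x^-1 * D.
Proof.
move=> x0 r0 rD xP P0 AP.
have hy : x * x^-1 = 1 by rewrite mulfV // gt_eqF.
have y0 : 0 < x^-1 by rewrite invr_gt0.
have hP : P <= x^-1.
  have -> : P = (x * P) * x^-1 by rewrite mulrC mulrA (mulrC _ x) hy mul1r.
  rewrite -[X in _ <= X]mul1r; apply: ler_wpM2r => //; exact: ltW.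
nra.
Qed.

Arguments key_ineq {R A x r D P}.

Lemma qlim (R : realType) (g : R -> R)
  (Hg : forall s t, 0 <= s -> s < t -> t <= 1 -> g s < g t)
  (Hr : forall A, exists N, forall n, (N <= n)%N ->
     A <= 2^+n * (g (1/2 + ee n.+1) - g (1/2)) /\
     A <= 2^+n * (g (1/2) - g (1/2 - ee n.+1))) :
  (fun h : R => h^-1 * (g (1/2 + h) - g (1/2))) @ 0^' --> +oo.
Proof.
apply/cvgryPge => A; have [N HN] := Hr A.
have gle s t : 0 <= s -> s <= t -> t <= 1 -> g s <= g t.
  move=> s0; rewrite le_eqVlt => /orP [/eqP -> //| st] t1.
  exact: ltW (Hg _ _ s0 st t1).
rewrite /prop_near1 /=; apply/nbhs_ballP; exists (ee N.+1) => /=; first exact: ee_pos.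
move=> x; rewrite /ball /= sub0r normrN => hx hx0.
have hxa : 0 < `|x| by rewrite normr_gt0.
have [n [hn [h1 h2]]] := dyad hxa (ltW hx).
have hNn : (N <= n)%N by apply: ltnW.
have [HA1 HA2] := HN n hNn.
have e1 := ee_half R n.
have e2 := ee_half R N.
have e3 := ee_pos R n.+1.
have P0 : 0 <= (2^+n : R) by apply: exprn_ge0.
have hP : `|x| * 2^+n <= 1.
  have := ee_inv R n; nra.
case: (ltgtP x 0) => hs; last by move: hx0; rewrite hs eqxx.
- have -> : x^-1 * (g (1/2 + x) - g (1/2)) =
            (`|x|)^-1 * (g (1/2) - g (1/2 - `|x|)).
    by rewrite ltr0_norm // opprK invrN mulNr -mulrN opprB.
  apply: (key_ineq hxa _ _ hP P0 HA2).
  - rewrite subr_gt0; apply: Hg; lra.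
  - have : g (1/2 - `|x|) <= g (1/2 - ee n.+1) by apply: gle; lra.
    lra.
- have -> : x^-1 * (g (1/2 + x) - g (1/2)) =
            (`|x|)^-1 * (g (1/2 + `|x|) - g (1/2)).
    by rewrite gtr0_norm.
  apply: (key_ineq hxa _ _ hP P0 HA1).
  - rewrite subr_gt0; apply: Hg; lra.
  - have : g (1/2 + ee n.+1) <= g (1/2 + `|x|) by apply: gle; lra.
    lra.
Qed.

Lemma inc (R : realType) (f : R * R -> R) : hmid f ->
  (forall s t : R, 0 <= s -> s < t -> t <= 1 -> f (edge12 s) < f (edge12 t)) ->
  (fun h : R => h^-1 * (f (edge12 (1 / 2 + h)) - f (edge12 (1 / 2)))) @ 0^' --> +oo.
Proof.
move=> Hm Hinc.
apply: (@qlim R (fun t => f (edge12 t))) => // A.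
have hcb : f (p1 R) < f (p2 R) by rewrite -pt_0 -pt_1; apply: Hinc; lra.
have [N1 H1] := @grow R (Ur R f 0 + Vr R f 0) (Ur R f 0 - Vr R f 0) A
                  ltac:(rewrite (@Sr R f Hm); lra).
have [N2 H2] := @grow R (- (Ul R f 0 + Vl R f 0)) (- (Ul R f 0 - Vl R f 0)) A
                  ltac:(rewrite (@Sl R f Hm); lra).
exists (maxn N1 N2) => n hn; split.
- have -> : f (edge12 (1/2 + ee n.+1)) - f (edge12 (1/2)) = Vr R f n
    by rewrite /Vr /fm pt_r pt_m.
  have -> : Vr R f n = (2 * Vr R f n) / 2 by field.
  rewrite (@rec_closed R _ _ (@Ur_S R f Hm) (@Vr_S R f Hm) n).
  apply: H1; exact: leq_trans (leq_maxl _ _) hn.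
- have -> : f (edge12 (1/2)) - f (edge12 (1/2 - ee n.+1)) = - Vl R f n
    by rewrite /Vl /fm pt_l pt_m opprB.
  have -> : - Vl R f n = - (2 * Vl R f n) / 2 by field.
  rewrite (@rec_closed R _ _ (@Ul_S R f Hm) (@Vl_S R f Hm) n).
  have := H2 n (leq_trans (leq_maxr _ _) hn).
  suff -> : - ((3 / 5) ^+ n * (Ul R f 0 + Vl R f 0) - (1 / 5) ^+ n * (Ul R f 0 - Vl R f 0)) =
     (3 / 5) ^+ n * - (Ul R f 0 + Vl R f 0) - (1 / 5) ^+ n * - (Ul R f 0 - Vl R f 0) by [].
  by ring.
Qed.

Theorem lemma4 (R : realType) (K : set (R * R)) (f : R * R -> R) :
  sg_attractor K -> sg_harmonic K f ->
  ((forall s t : R, 0 <= s -> s < t -> t <= 1 ->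
       f (edge12 s) < f (edge12 t)) ->
     (fun h : R => h^-1 * (f (edge12 (1 / 2 + h)) - f (edge12 (1 / 2))))
       @ 0^' --> +oo) /\
  ((forall s t : R, 0 <= s -> s < t -> t <= 1 ->
       f (edge12 t) < f (edge12 s)) ->
     (fun h : R => h^-1 * (f (edge12 (1 / 2 + h)) - f (edge12 (1 / 2))))
       @ 0^' --> -oo).
Proof.
move=> _ [_ Hm]; split => Hmon; first exact: inc.
rewrite -cvgNry.
have Hm' : hmid (fun x => - f x).
  move=> w i j k hij hjk hik; rewrite (Hm w i j k hij hjk hik); by ring.
have Hinc' : forall s t : R, 0 <= s -> s < t -> t <= 1 ->
    - f (edge12 s) < - f (edge12 t).
  by move=> s t s0 st t1; rewrite ltrN2; exact: Hmon.
have E : (- (fun h : R => h^-1 * (f (edge12 (1 / 2 + h)) - f (edge12 (1 / 2))))) =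
  (fun h : R => h^-1 * (- f (edge12 (1 / 2 + h)) - - f (edge12 (1 / 2)))).
  apply/funext => h; change (- (h^-1 * (f (edge12 (1/2+h)) - f (edge12 (1/2)))) = h^-1 * (- f (edge12 (1 / 2 + h)) - - f (edge12 (1 / 2)))); by ring.
rewrite E; exact: (@inc R (fun x => - f x) Hm' Hinc').
Qed.
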